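(* Let $\Phi$ be an irreducible crystallographic root system with simple system $S$ and positive system $\Phi^+$, ordered as the root poset. If $\alpha,\beta,\gamma\in\Phi^+$, $\beta+\gamma\in\Phi^+$ and $\alpha\le\beta+\gamma$, then $\alpha\le\beta$, or $\alpha\le\gamma$, or $\alpha=\beta'+\gamma'$ for some $\beta',\gamma'\in\Phi^+$ with $\beta'\le\beta$ and $\gamma'\le\gamma$.
   Context: The root poset is $\Phi^+$ with the partial order $\alpha\le\beta$ iff $\beta-\alpha$ is a linear combination of simple roots (elements of $S$) with nonnegative integer coefficients. *)

(* Defs.v *)
From HB Require Import structures.
From mathcomp Require Import all_boot all_order all_algebra.
Set Implicit Arguments. Unset Strict Implicit. Unset Printing Implicit Defensive.
Import Order.TTheory GRing.Theory Num.Theory.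
Local Open Scope ring_scope.

Section RootSystems.
Variables (R : realFieldType) (n : nat).
Notation V := 'rV[R]_n.

Definition dot (u v : V) : R := (u *m v^T) 0 0.

Definition refl (a x : V) : V := x - ((2 * dot x a) / dot a a) *: a.

Definition root_system (Phi : seq V) : Prop :=
  [/\ (0 : V) \notin Phi,
      (forall v : V, exists c : 'I_(size Phi) -> R,
          v = \sum_(i < size Phi) c i *: Phi`_i),
      (forall a b, a \in Phi -> b \in Phi -> refl a b \in Phi),
      (forall a (c : R), a \in Phi -> c *: a \in Phi -> c = 1 \/ c = -1) &
      (forall a b, a \in Phi -> b \in Phi ->
          exists z : int, (2 * dot b a) / dot a a = z%:~R)].

Definition irreducible_rs (Phi : seq V) : Prop :=
  forall P : pred V,
    (forall a b, a \in Phi -> b \in Phi -> P a -> ~~ P b -> dot a b = 0) ->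
    all P Phi \/ all (predC P) Phi.

Definition simple_system (Phi S : seq V) : Prop :=
  [/\ {subset S <= Phi},
      uniq S,
      (forall c : 'I_(size S) -> R,
          \sum_(i < size S) c i *: S`_i = 0 -> forall i, c i = 0) &
      (forall a, a \in Phi -> exists c : 'I_(size S) -> R,
          a = \sum_(i < size S) c i *: S`_i /\
          ((forall i, 0 <= c i) \/ (forall i, c i <= 0)))].

Definition positive_root (Phi S : seq V) (a : V) : Prop :=
  a \in Phi /\ exists c : 'I_(size S) -> R,
    a = \sum_(i < size S) c i *: S`_i /\ (forall i, 0 <= c i).

Definition root_le (S : seq V) (a b : V) : Prop :=
  exists k : 'I_(size S) -> nat, b - a = \sum_(i < size S) (k i)%:R *: S`_i.

End RootSystems.

(* Main.v *)
Require Import Defs.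
From mathcomp Require Import all_boot all_order all_algebra.
From mathcomp Require Import lra zify.
Import Order.TTheory GRing.Theory Num.Theory.
Local Open Scope ring_scope.
Set Implicit Arguments. Unset Strict Implicit. Unset Printing Implicit Defensive.

Section Dot.
Variables (R : realFieldType) (n : nat).
Notation V := 'rV[R]_n.
Notation dot := (@dot R n).

Lemma dotE (u v : V) : dot u v = \sum_j u 0 j * v 0 j.
Proof. by rewrite /dot !mxE; apply: eq_bigr => j _; rewrite mxE. Qed.

Lemma dotC (u v : V) : dot u v = dot v u.
Proof. by rewrite !dotE; apply: eq_bigr => j _; rewrite mulrC. Qed.

Lemma dotDl (u v w : V) : dot (u + v) w = dot u w + dot v w.
Proof. by rewrite !dotE -big_split; apply: eq_bigr => j _; rewrite mxE mulrDl. Qed.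

Lemma dotZl (c : R) (u w : V) : dot (c *: u) w = c * dot u w.
Proof. by rewrite !dotE mulr_sumr; apply: eq_bigr => j _; rewrite mxE mulrA. Qed.

Lemma dotNl (u w : V) : dot (- u) w = - dot u w.
Proof. by rewrite -scaleN1r dotZl mulN1r. Qed.

Lemma dotBl (u v w : V) : dot (u - v) w = dot u w - dot v w.
Proof. by rewrite dotDl dotNl. Qed.

Lemma dotDr (u v w : V) : dot w (u + v) = dot w u + dot w v.
Proof. by rewrite dotC dotDl !(dotC w). Qed.

Lemma dotBr (u v w : V) : dot w (u - v) = dot w u - dot w v.
Proof. by rewrite dotC dotBl !(dotC w). Qed.

Lemma dotNr (u w : V) : dot w (- u) = - dot w u.
Proof. by rewrite dotC dotNl dotC. Qed.

Lemma dot_suml m (F : 'I_m -> V) (w : V) :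
  dot (\sum_i F i) w = \sum_i dot (F i) w.
Proof.
rewrite dotE; under eq_bigr => j _ do rewrite summxE mulr_suml.
rewrite exchange_big; apply: eq_bigr => i _; by rewrite dotE.
Qed.

Lemma dot_ge0 (v : V) : 0 <= dot v v.
Proof. by rewrite dotE; apply: sumr_ge0 => j _; rewrite -expr2 sqr_ge0. Qed.

Lemma dot_eq0 (v : V) : dot v v = 0 -> v = 0.
Proof.
rewrite dotE => H; apply/rowP => j; rewrite mxE.
have H0 : forall i : 'I_n, true -> 0 <= v 0 i * v 0 i.
  by move=> i _; rewrite -expr2 sqr_ge0.
have := psumr_eq0P H0 H (i:=j) isT.
by move/eqP; rewrite mulf_eq0 orbb => /eqP.
Qed.

Lemma dot_gt0 (v : V) : v != 0 -> 0 < dot v v.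
Proof.
move=> Hv; rewrite lt_def dot_ge0 andbT; apply/negP => /eqP H; symmetry in H.
by move: Hv; rewrite (@dot_eq0 v (esym H)) eqxx.
Qed.
End Dot.

Section Roots.
Variables (R : realFieldType) (n : nat) (Phi S : seq 'rV[R]_n).
Hypothesis hPhi : root_system Phi.
Hypothesis hS : simple_system Phi S.
Notation V := 'rV[R]_n.
Notation dot := (@dot R n).
Notation pos := (positive_root Phi S).

Lemma notin0 : (0 : V) \notin Phi.
Proof. by case: hPhi. Qed.

Lemma root_neq0 a : a \in Phi -> a != 0.
Proof. by move=> Ha; apply/eqP => E; move: notin0; rewrite -E Ha. Qed.

Lemma dot_root_gt0 a : a \in Phi -> 0 < dot a a.
Proof. by move=> Ha; apply: dot_gt0; apply: root_neq0. Qed.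

Lemma root_neg a : a \in Phi -> - a \in Phi.
Proof.
move=> Ha; case: hPhi => _ _ Hr _ _.
have := Hr a a Ha Ha; rewrite /refl -mulrA divff ?mulr1.
  by rewrite scalerDl scale1r opprD addrA subrr add0r.
by rewrite gt_eqF // dot_root_gt0.
Qed.

Lemma root_sub x y : x \in Phi -> y \in Phi -> 0 < dot x y -> x != y ->
  x - y \in Phi.
Proof.
move=> Hx Hy Hxy Hne; case: hPhi => _ _ Hr _ Hint.
have Px := dot_root_gt0 Hx; have Py := dot_root_gt0 Hy.
have [z1 Hz1] := Hint y x Hy Hx.
have [z2 Hz2] := Hint x y Hx Hy.
have pz1 : (0 < z1)%R.
  by rewrite -(ltr0z R) -Hz1 divr_gt0 // mulr_gt0.
have pz2 : (0 < z2)%R.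
  by rewrite -(ltr0z R) -Hz2 divr_gt0 // mulr_gt0 // dotC.
have [lt1|ge1] := ltP z1 2.
  have e : z1 = 1 by lia.
  by move: (Hr y x Hy Hx); rewrite /refl Hz1 e scale1r.
have [lt2|ge2] := ltP z2 2.
  have e : z2 = 1 by lia.
  by move: (Hr x y Hx Hy); rewrite /refl Hz2 e scale1r => /root_neg; rewrite opprB.
have g1 : ((2:int)%:~R : R) <= z1%:~R by rewrite ler_int.
have g2 : ((2:int)%:~R : R) <= z2%:~R by rewrite ler_int.
have e1 : 2 * dot x y = z1%:~R * dot y y.
  by rewrite -Hz1 divfK // gt_eqF.
have e2 : 2 * dot x y = z2%:~R * dot x x.
  by rewrite dotC -Hz2 divfK // gt_eqF.
have : dot (x - y) (x - y) = 0.
  apply/eqP; rewrite eq_le dot_ge0 andbT.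
  rewrite !dotBl !dotBr (dotC y x).
  simpl in g1, g2. nra.
move/dot_eq0/eqP; rewrite subr_eq0 => E.
by move: Hne; rewrite E.
Qed.
End Roots.

Section Coefs.
Variables (R : realFieldType) (n : nat) (Phi S : seq 'rV[R]_n).
Hypothesis hPhi : root_system Phi.
Hypothesis hS : simple_system Phi S.
Notation V := 'rV[R]_n.
Notation dot := (@dot R n).
Notation pos := (positive_root Phi S).
Notation m := (size S).

Lemma simple_in (i : 'I_m) : S`_i \in Phi.
Proof. by case: hS => Hsub _ _ _; apply: Hsub; apply: mem_nth. Qed.

Lemma coef_eq (c d : 'I_m -> R) :
  \sum_i c i *: S`_i = \sum_i d i *: S`_i -> forall i, c i = d i.
Proof.
move=> E i; case: hS => _ _ Hind _.
have := Hind (fun j => c j - d j); rewrite /=.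
under eq_bigr => j _ do rewrite scalerBl.
rewrite sumrB E subrr => /(_ erefl i) /eqP.
by rewrite subr_eq0 => /eqP.
Qed.

Definition ind (i0 j : 'I_m) : R := (j == i0)%:R.

Lemma sum_ind (i0 : 'I_m) : \sum_j ind i0 j *: S`_j = S`_i0.
Proof.
rewrite (bigD1 i0) //= /ind eqxx scale1r big1 ?addr0 // => j /negbTE ->.
by rewrite scale0r.
Qed.

Lemma pos_simple (i0 : 'I_m) : pos S`_i0.
Proof.
split; first exact: simple_in.
exists (ind i0); split; first by rewrite sum_ind.
by move=> j; rewrite /ind ler0n.
Qed.

Lemma pos_add x y : pos x -> pos y -> x + y \in Phi -> pos (x + y).
Proof.
move=> [_ [c [Ec Hc]]] [_ [d [Ed Hd]]] H; split => //.
exists (fun j => c j + d j); split.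
  by rewrite Ec Ed -big_split; apply: eq_bigr => j _; rewrite scalerDl.
by move=> j; rewrite addr_ge0.
Qed.

Lemma pos_add_neq0 x y : pos x -> pos y -> x + y != 0.
Proof.
move=> [Hx [c [Ec Hc]]] [_ [d [Ed Hd]]]; apply/eqP => E.
have E2 : \sum_(i < m) (c i + d i) *: S`_i = \sum_(i < m) (0 : R) *: S`_i.
  rewrite [RHS]big1; last by move=> j _; rewrite scale0r.
  rewrite -[in RHS]E Ec Ed -big_split; apply: eq_bigr => j _; by rewrite scalerDl.
have c0 : forall i : 'I_m, c i = 0.
  move=> i; have := coef_eq E2 i; have := Hc i; have := Hd i; lra.
move: Hx; rewrite Ec big1 ?(negbTE (notin0 hPhi)) // => j _.
by rewrite c0 scale0r.
Qed.

Lemma pos_sub x (i0 : 'I_m) : pos x -> x - S`_i0 \in Phi -> x != S`_i0 ->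
  pos (x - S`_i0).
Proof.
move=> [Hx [c [Ec Hc]]] Hin Hne; split => //.
case: hS => _ _ _ /(_ _ Hin) [d [Ed [Hd|Hd]]]; first by exists d.
exfalso.
have E2 : \sum_(i < m) (c i - ind i0 i) *: S`_i = \sum_i d i *: S`_i.
  rewrite -Ed Ec -sum_ind -sumrB; apply: eq_bigr => j _; by rewrite scalerBl.
have c0 : forall j, j != i0 -> c j = 0.
  move=> j Hj; have := coef_eq E2 j; rewrite /ind (negbTE Hj) /= subr0.
  have := Hc j; have := Hd j; lra.
have Ex : x = c i0 *: S`_i0.
  rewrite Ec (bigD1 i0) //= big1 ?addr0 // => j Hj; by rewrite c0 // scale0r.
case: hPhi => _ _ _ Hred _.
have := Hred _ (c i0) (simple_in i0); rewrite -Ex => /(_ Hx) [e|e].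
  by move: Hne; rewrite Ex e scale1r eqxx.
by have := Hc i0; rewrite e; lra.
Qed.

Notation rle := (root_le S).

Lemma rle_refl x : rle x x.
Proof.
exists (fun _ => 0%N); rewrite subrr big1 // => j _; by rewrite scale0r.
Qed.

Lemma rle_trans x y z : rle x y -> rle y z -> rle x z.
Proof.
move=> [k1 E1] [k2 E2]; exists (fun j => k1 j + k2 j)%N.
have -> : z - x = (z - y) + (y - x) by rewrite addrA subrK.
rewrite E1 E2 -big_split; apply: eq_bigr => j _; by rewrite natrD scalerDl addrC.
Qed.

Lemma rle_simple x (i0 : 'I_m) : rle x (x + S`_i0).
Proof.
exists (fun j => nat_of_bool (j == i0)).
rewrite addrC addKr -sum_ind; apply: eq_bigr => j _; by [].
Qed.

Lemma rle_sub_simple x (i0 : 'I_m) : rle (x - S`_i0) x.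
Proof. by have := rle_simple (x - S`_i0) i0; rewrite subrK. Qed.

Definition kdec (k : 'I_m -> nat) (i0 : 'I_m) (j : 'I_m) := (k j - (j == i0))%N.

Lemma kdec_sum (k : 'I_m -> nat) (i0 : 'I_m) : (0 < k i0)%N ->
  \sum_j (k j)%:R *: S`_j = \sum_j (kdec k i0 j)%:R *: S`_j + S`_i0.
Proof.
move=> Hk; rewrite -sum_ind -big_split; apply: eq_bigr => j _ /=.
rewrite /kdec /ind -scalerDl -natrD; congr (_%:R *: _).
case: eqP => [->|]; lia.
Qed.

Lemma kdec_height (k : 'I_m -> nat) (i0 : 'I_m) : (0 < k i0)%N ->
  (\sum_j k j = (\sum_j kdec k i0 j).+1)%N.
Proof.
move=> Hk; rewrite (bigD1 i0) //= [in RHS](bigD1 i0) //= /kdec eqxx.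
have -> : (\sum_(j | j != i0) (k j - (j == i0))%N = \sum_(j | j != i0) k j)%N.
  by apply: eq_bigr => j /negbTE ->; rewrite subn0.
rewrite /= subn1 -addSn prednK //.
Qed.

End Coefs.

Ltac vsolve H := apply/rowP; let jj := fresh "jj" in intro jj; move: (congr1 (fun v : matrix _ 1 _ => v 0 jj) H); rewrite /= ?mxE; lra.

Section Main.
Variables (R : realFieldType) (n : nat) (Phi S : seq 'rV[R]_n).
Hypothesis hPhi : root_system Phi.
Hypothesis hS : simple_system Phi S.
Notation V := 'rV[R]_n.
Notation dot := (@dot R n).
Notation pos := (positive_root Phi S).
Notation m := (size S).
Notation rle := (root_le S).

Definition concl (a b c : V) := rle a b \/ rle a c \/
  exists b' c', [/\ pos b', pos c', rle b' b, rle c' c & a = b' + c'].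

Lemma concl_mono a b c b2 c2 : concl a b2 c2 -> rle b2 b -> rle c2 c ->
  concl a b c.
Proof.
move=> [H|[H|[b' [c' [H1 H2 H3 H4 H5]]]]] Hb Hc.
- by left; apply: rle_trans Hb.
- by right; left; apply: rle_trans Hc.
- right; right; exists b', c'; split => //; [exact: rle_trans Hb|exact: rle_trans Hc].
Qed.

Lemma concl_sym a b c : concl a b c -> concl a c b.
Proof.
move=> [H|[H|[b' [c' [H1 H2 H3 H4 H5]]]]].
- by right; left.
- by left.
- by right; right; exists c', b'; split => //; rewrite addrC.
Qed.

Lemma concl_zero a b c (k : 'I_m -> nat) : (forall j, k j = 0%N) ->
  pos b -> pos c -> b + c - a = \sum_j (k j)%:R *: S`_j -> concl a b c.
Proof.
move=> k0 Hb Hc E; right; right; exists b, c; split => //; try exact: rle_refl.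
have E0 : b + c - a = 0.
  by rewrite E big1 // => j _; rewrite k0 scale0r.
vsolve E0.
Qed.

Lemma case1 a b c (i0 : 'I_m) (k' : 'I_m -> nat) :
  (forall b2, pos b2 -> pos (b2 + c) ->
     b2 + c - a = \sum_j (k' j)%:R *: S`_j -> concl a b2 c) ->
  pos a -> pos b -> pos c -> pos (b + c) ->
  b + c - a = \sum_j (k' j)%:R *: S`_j + S`_i0 ->
  0 < dot b S`_i0 -> 0 < dot (b + c) S`_i0 -> concl a b c.
Proof.
move=> IH Ha Hb Hc Hbc E Hbs Hbcs.
have [eb|neb] := eqVneq b S`_i0.
  right; left; exists k'.
  rewrite eb in E; vsolve E.
have Hs := simple_in hS i0.
have Hbs' : b - S`_i0 \in Phi by apply: root_sub => //; case: Hb.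
have Pbs := pos_sub hPhi hS Hb Hbs' neb.
have nz := pos_add_neq0 hPhi hS Pbs Hc.
have ne : b + c != S`_i0.
  apply: contraNneq nz => e; apply/eqP; vsolve e.
have Hbcs' : b + c - S`_i0 \in Phi by apply: root_sub => //; case: Hbc.
have e2 : b - S`_i0 + c = b + c - S`_i0 by rewrite addrAC.
have Pbsc : pos (b - S`_i0 + c).
  by apply: pos_add => //; rewrite e2.
apply: concl_mono (IH _ Pbs Pbsc _) _ (rle_refl _ _).
  vsolve E.
exact: rle_sub_simple.
Qed.

Lemma direct1 a b c (i0 : 'I_m) : pos a -> pos b -> pos c ->
  b + c = a + S`_i0 -> 0 < dot a b -> concl a b c.
Proof.
move=> Ha Hb Hc E Hab.
have [eab|neab] := eqVneq a b; first by left; rewrite eab; exact: rle_refl.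
have Hab' : a - b \in Phi by apply: root_sub => //; [case: Ha|case: Hb].
have e1 : a - b = c - S`_i0 by vsolve E.
have ncs : c != S`_i0.
  apply: contraNneq neab => e; apply/eqP; rewrite e in E; vsolve E.
have Pcs : pos (c - S`_i0) by apply: pos_sub => //; rewrite -e1.
right; right; exists b, (c - S`_i0); split => //.
- exact: rle_refl.
- exact: rle_sub_simple.
- vsolve E.
Qed.

Lemma direct a b c (i0 : 'I_m) : pos a -> pos b -> pos c -> pos (b + c) ->
  b + c = a + S`_i0 -> dot (b + c) S`_i0 <= 0 -> concl a b c.
Proof.
move=> Ha Hb Hc Hbc E Hle.
have Hs := simple_in hS i0.
have nz : b + c != 0 by apply: (root_neq0 hPhi); case: Hbc.
have Hpos : 0 < dot a a + dot a S`_i0.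
  rewrite ltNge; apply/negP => H.
  move: nz; rewrite E => /negP; apply; apply/eqP; apply: dot_eq0.
  rewrite E dotDl in Hle.
  apply/eqP; rewrite eq_le dot_ge0 andbT.
  rewrite !dotDl !dotDr (dotC S`_i0 a). lra.
have Hsum : 0 < dot a b + dot a c by rewrite -dotDr E dotDr.
have [Hab|Hab] := ltP 0 (dot a b).
  exact: (direct1 Ha Hb Hc E).
apply: concl_sym; apply: (direct1 Ha Hc Hb (i0 := i0)).
  by rewrite addrC.
lra.
Qed.

End Main.

Section Main2.
Variables (R : realFieldType) (n : nat) (Phi S : seq 'rV[R]_n).
Hypothesis hPhi : root_system Phi.
Hypothesis hS : simple_system Phi S.
Notation V := 'rV[R]_n.
Notation dot := (@dot R n).
Notation pos := (positive_root Phi S).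
Notation m := (size S).
Notation rle := (root_le S).
Notation concl := (concl Phi S).

Lemma exists_s (k : 'I_m -> nat) : ~~ [forall j, k j == 0%N] ->
  exists i0, (0 < k i0)%N /\ 0 < dot (\sum_j (k j)%:R *: S`_j) S`_i0.
Proof.
move=> knz.
set D := \sum_j (k j)%:R *: S`_j.
have Dnz : D != 0.
  apply/eqP => D0; move: knz; apply/negP; rewrite negbK; apply/forallP => j.
  have E : \sum_(j < m) (k j)%:R *: S`_j = \sum_(j < m) (0 : R) *: S`_j.
    by rewrite [RHS]big1 // => i _; rewrite scale0r.
  by have := coef_eq hS E j; move/eqP; rewrite pnatr_eq0.
have HDD := dot_gt0 Dnz.
have : [exists j, (0 < k j)%N && (0 < dot S`_j D)].
  case: existsP => // Hn; exfalso.
  have H : forall j, ~~ ((0 < k j)%N && (0 < dot S`_j D)).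
    by move=> j; apply/negP => Hj; apply: Hn; exists j.
  move: HDD; rewrite {1}/D dot_suml; apply/negP; rewrite -leNgt.
  apply: sumr_le0 => j _; rewrite dotZl.
  have := H j; rewrite negb_and -!leNgt => /orP [|Hj].
    by rewrite -eqn0Ngt => /eqP ->; rewrite mul0r.
  by apply: mulr_ge0_le0 => //; rewrite ler0n.
move/existsP => [j /andP [H1 H2]]; exists j; split => //; by rewrite dotC.
Qed.

Lemma sum_e (i0 : 'I_m) : (\sum_(j < m) nat_of_bool (j == i0) = 1)%N.
Proof. by rewrite (bigD1 i0) //= eqxx big1 // => j /negbTE ->. Qed.

Lemma main h : forall a b c (k : 'I_m -> nat), (\sum_j k j <= h)%N ->
  pos a -> pos b -> pos c -> pos (b + c) ->
  b + c - a = \sum_j (k j)%:R *: S`_j -> concl a b c.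
Proof.
elim: h => [|h IH] a b c k Hh Ha Hb Hc Hbc Ek.
  apply: (concl_zero (k:=k)) => // j.
  by move: Hh; rewrite leqn0 sum_nat_eq0 => /forallP /(_ j) /eqP.
have [k0|knz] := boolP [forall j, k j == 0%N].
  by apply: (concl_zero (k:=k)) => // j; apply/eqP; exact: (forallP k0 j).
have [i0 [Hk HD]] := exists_s knz; rewrite -Ek in HD.
have Ek' := Ek; rewrite (kdec_sum Hk) in Ek'.
have Hh' : (\sum_j kdec k i0 j <= h)%N by move: Hh; rewrite (kdec_height Hk).
have [Hdp|Hdn] := ltP 0 (dot (b + c) S`_i0).
  have : 0 < dot b S`_i0 + dot c S`_i0 by rewrite -dotDl.
  have [Hbs|Hbs] := ltP 0 (dot b S`_i0) => Hsum.
    apply: (case1 hPhi hS (i0:=i0) (k':=kdec k i0)) => // b2 Pb2 Pb2c E2.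
    exact: (IH a b2 c (kdec k i0)).
  apply: concl_sym; apply: (case1 hPhi hS (i0:=i0) (k':=kdec k i0)) => //.
  - move=> c2 Pc2 Pc2b E2; apply: concl_sym.
    apply: (IH a b c2 (kdec k i0)) => //; first by rewrite addrC.
    by rewrite (addrC b).
  - by rewrite (addrC c).
  - by rewrite (addrC c).
  - lra.
  - by rewrite (addrC c).
have Has : dot a S`_i0 < 0 by move: HD; rewrite dotBl; lra.
have Hs := simple_in hS i0.
have Ps := pos_simple hS i0.
have [kd0|kdnz] := boolP [forall j, kdec k i0 j == 0%N].
  apply: (direct hPhi hS (i0 := i0)) => //.
  have Z : \sum_j (kdec k i0 j)%:R *: S`_j = 0.
    by apply: big1 => j _; rewrite (eqP (forallP kd0 j)) scale0r.
  rewrite Z add0r in Ek'; vsolve Ek'.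
have h1 : (1 <= h)%N.
  apply: leq_trans Hh'; rewrite lt0n sum_nat_eq0; exact: kdnz.
have Has' : a + S`_i0 \in Phi.
  have nz := pos_add_neq0 hPhi hS Ha Ps.
  have := root_sub hPhi (x:=a) (y:= - S`_i0).
  rewrite opprK; apply => //; first by case: Ha.
  - exact: root_neg.
  - by rewrite dotNr oppr_gt0.
  - by apply: contraNneq nz => ->; rewrite addNr.
have Pas := pos_add Ha Ps Has'.
have E3 : b + c - (a + S`_i0) = \sum_j (kdec k i0 j)%:R *: S`_j by vsolve Ek'.
case: (IH (a + S`_i0) b c (kdec k i0) Hh' Pas Hb Hc Hbc E3) =>
  [H|[H|[b' [c' [Pb' Pc' Hb' Hc' Eabc]]]]].
- by left; apply: rle_trans H; apply: rle_simple.
- by right; left; apply: rle_trans H; apply: rle_simple.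
- apply: concl_mono Hb' Hc'.
  apply: (IH a b' c' (fun j => nat_of_bool (j == i0))) => //.
  + by rewrite sum_e.
  + by rewrite -Eabc.
  + have := sum_ind (S:=S) i0; rewrite /ind => ->.
    rewrite -Eabc; by rewrite addrC addKr.
Qed.

End Main2.

Theorem lemma8 (R : realFieldType) (n : nat) (Phi S : seq 'rV[R]_n)
  (hPhi : root_system Phi) (hirr : irreducible_rs Phi)
  (hS : simple_system Phi S)
  (alpha beta gamma : 'rV[R]_n)
  (ha : positive_root Phi S alpha) (hb : positive_root Phi S beta)
  (hc : positive_root Phi S gamma)
  (hbc : positive_root Phi S (beta + gamma))
  (hle : root_le S alpha (beta + gamma)) :
  root_le S alpha beta \/ root_le S alpha gamma \/
  exists beta' gamma',
    [/\ positive_root Phi S beta', positive_root Phi S gamma',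
        root_le S beta' beta, root_le S gamma' gamma & alpha = beta' + gamma'].
Proof.
case: hle => k Ek.
exact: (main hPhi hS (leqnn _) ha hb hc hbc Ek).
Qed.
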